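(* Let $C$ be a Clifford system of rank $m+1$ on $\mathbb{R}^{2l}$ with $l>m+1$. If the Clifford foliation $(\mathbb{S}^{2l-1},\mathcal{F}_C)$ is homogeneous, then the FKM isoparametric foliation $(\mathbb{S}^{2l-1},\mathcal{F}'_C)$ is homogeneous as well.
   Context: A Clifford system $C$ of rank $m+1$ ($m\ge1$) on $\mathbb{R}^{2l}$, with the standard inner product, is an $(m+1)$-dimensional linear subspace $\mathbb{R}_C$ of the symmetric endomorphisms of $\mathbb{R}^{2l}$. It must admit a basis $P_0,\dots,P_m$ with $P_i^2=\mathrm{Id}$ and $P_iP_j=-P_jP_i$ for $i\ne j$, orthonormal for $\langle A,B\rangle=\frac1{2l}\mathrm{tr}(AB)$. The map $\pi_C$ is $\pi_C(x)=\sum_i\langle P_ix,x\rangle P_i$ on $\mathbb{S}^{2l-1}$. The Clifford foliation $\mathcal{F}_C$ is the partition of $\mathbb{S}^{2l-1}$ into fibers of $\pi_C$. The FKM foliation $\mathcal{F}'_C$ is the partition of $\mathbb{S}^{2l-1}$ into the sets $\{x:\|\pi_C(x)\|=r\}$, $r\in[0,1]$. Equivalently, these are the level sets of $F(x)=1-2\sum_{i}\langle P_ix,x\rangle^2$. A foliation is homogeneous if its leaves are the orbits of an isometric action of a connected Lie group (here a closed subgroup of $\mathrm{SO}(2l)$). *)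

(* Defs.v *)
From Stdlib Require Import Reals.
From mathcomp Require Import all_boot all_fingroup.

Set Implicit Arguments.
Unset Strict Implicit.
Unset Printing Implicit Defensive.

Local Open Scope R_scope.

Definition vec (n : nat) := 'I_n -> R.
Definition mat (n : nat) := 'I_n -> 'I_n -> R.

Definition rsum (n : nat) (f : 'I_n -> R) : R := \big[Rplus/0]_(i < n) f i.

Definition dot (n : nat) (x y : vec n) : R := rsum (fun i => x i * y i).
Definition mxv (n : nat) (A : mat n) (x : vec n) : vec n :=
  fun i => rsum (fun k => A i k * x k).
Definition mxm (n : nat) (A B : mat n) : mat n :=
  fun i j => rsum (fun k => A i k * B k j).
Definition idm (n : nat) : mat n := fun i j => if i == j then 1 else 0.
Arguments idm n : clear implicits.
Definition trm (n : nat) (A : mat n) : mat n := fun i j => A j i.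
Definition oppm (n : nat) (A : mat n) : mat n := fun i j => - A i j.
Definition trace (n : nat) (A : mat n) : R := rsum (fun i => A i i).
Definition det (n : nat) (A : mat n) : R :=
  \big[Rplus/0]_(s : 'S_n)
     ((if odd_perm s then -1 else 1) * \big[Rmult/1]_(i < n) A i (s i)).

Definition symmetric_mat (n : nat) (A : mat n) : Prop := forall i j, A i j = A j i.

Definition mip (n : nat) (A B : mat n) : R := trace (mxm A B) / INR n.
Definition mnorm (n : nat) (A : mat n) : R := sqrt (mip A A).

Definition clifford_system (n m : nat) (P : 'I_m.+1 -> mat n) : Prop :=
  (forall i, symmetric_mat (P i)) /\
  (forall i, mxm (P i) (P i) = idm n) /\
  (forall i j, i <> j -> mxm (P i) (P j) = oppm (mxm (P j) (P i))) /\
  (forall i j, mip (P i) (P j) = if i == j then 1 else 0).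

Definition pi_C (n m : nat) (P : 'I_m.+1 -> mat n) (x : vec n) : mat n :=
  fun a b => rsum (fun i : 'I_m.+1 => dot (mxv (P i) x) x * P i a b).

Definition sphere (n : nat) (x : vec n) : Prop := dot x x = 1.

(* A foliation of S^{n-1} is encoded by its "same leaf" relation. *)
Definition clifford_leaf (n m : nat) (P : 'I_m.+1 -> mat n) (x y : vec n) : Prop :=
  pi_C P x = pi_C P y.
Definition fkm_leaf (n m : nat) (P : 'I_m.+1 -> mat n) (x y : vec n) : Prop :=
  mnorm (pi_C P x) = mnorm (pi_C P y).

Definition SO_subgroup (n : nat) (G : mat n -> Prop) : Prop :=
  (forall A, G A -> mxm (trm A) A = idm n /\ det A = 1) /\
  G (idm n) /\
  (forall A B, G A -> G B -> G (mxm A B)) /\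
  (forall A, G A -> G (trm A)).

Definition closed_set (n : nat) (G : mat n -> Prop) : Prop :=
  forall (s : nat -> mat n) (A : mat n),
    (forall k, G (s k)) ->
    (forall i j, Un_cv (fun k => s k i j) (A i j)) -> G A.

Definition rel_open (n : nat) (G U : mat n -> Prop) : Prop :=
  forall A, G A -> U A ->
    exists eps, 0 < eps /\
      forall B, G B -> (forall i j, Rabs (B i j - A i j) < eps) -> U B.

Definition connected_set (n : nat) (G : mat n -> Prop) : Prop :=
  forall U V : mat n -> Prop,
    rel_open G U -> rel_open G V ->
    (forall A, G A -> U A \/ V A) ->
    (forall A, G A -> U A -> V A -> False) ->
    (exists A, G A /\ U A) -> (exists A, G A /\ V A) -> False.

Definition homogeneous_foliation (n : nat) (L : vec n -> vec n -> Prop) : Prop :=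
  exists G : mat n -> Prop,
    SO_subgroup G /\ closed_set G /\ connected_set G /\
    forall x y, sphere x -> sphere y ->
      (L x y <-> exists g, G g /\ mxv g x = y).

(* Main.v *)
Require Import Defs.
From Stdlib Require Import Reals Lra Lia FunctionalExtensionality ClassicalEpsilon Classical.
From mathcomp Require Import all_boot all_fingroup all_algebra.
From mathcomp Require Import Rstruct.
From mathcomp Require ring.
Set Implicit Arguments. Unset Strict Implicit. Unset Printing Implicit Defensive.

Module PA.
Import GRing.Theory.
Import GRing.Theory.

Section Conv.
Variable n : nat.
Definition M (A : mat n) : 'M[R]_n := \matrix_(i, j) A i j.
Definition V (x : vec n) : 'cV[R]_n := \col_i x i.
Definition ofM (B : 'M[R]_n) : mat n := fun i j => B i j.
Definition ofV (v : 'cV[R]_n) : vec n := fun i => v i ord0.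

Lemma MK A : ofM (M A) = A.
Proof. by do 2 (apply: functional_extensionality => ?); rewrite /ofM mxE. Qed.
Lemma ofMK B : M (ofM B) = B.
Proof. by apply/matrixP => i j; rewrite mxE. Qed.
Lemma M_inj A B : M A = M B -> A = B.
Proof. by move=> h; rewrite -(MK A) h MK. Qed.
Lemma VK x : ofV (V x) = x.
Proof. by apply: functional_extensionality => ?; rewrite /ofV mxE. Qed.
Lemma V_inj x y : V x = V y -> x = y.
Proof. by move=> h; rewrite -(VK x) h VK. Qed.

Lemma M_mxm A B : M (mxm A B) = (M A *m M B)%R.
Proof. apply/matrixP => i j; rewrite !mxE /mxm /rsum. apply: eq_bigr => k _; by rewrite !mxE. Qed.
Lemma M_trm A : M (trm A) = (M A)^T%R.
Proof. by apply/matrixP => i j; rewrite !mxE. Qed.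
Lemma M_idm : M (Defs.idm n) = 1%:M%R.
Proof. by apply/matrixP => i j; rewrite !mxE /Defs.idm; case: (i == j). Qed.
Lemma V_mxv A x : V (mxv A x) = (M A *m V x)%R.
Proof. apply/matrixP => i j; rewrite !mxE /mxv /rsum. apply: eq_bigr => k _; by rewrite !mxE. Qed.
Lemma dotE x y : dot x y = (((V x)^T *m V y) ord0 ord0)%R.
Proof. rewrite !mxE /dot /rsum. apply: eq_bigr => k _; by rewrite !mxE. Qed.
Lemma detE A : det A = (\det (M A))%R.
Proof. rewrite /det /determinant. apply eq_bigr => s _. 
  have -> : (\prod_(i < n) M A i (s i))%R = \big[Rmult/1%R]_(i < n) A i (s i).
    by apply: eq_bigr => i _; rewrite mxE.
  case: (odd_perm s) => /=. by rewrite expr1. by rewrite expr0. Qed.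
Lemma traceE A : trace A = (\tr (M A))%R.
Proof. rewrite /trace /mxtrace /rsum; apply: eq_bigr => i _; by rewrite mxE. Qed.
End Conv.

End PA.

Module PB.
Import PA.
Local Open Scope R_scope.

Lemma cv_const (c : R) : Un_cv (fun _ => c) c.
Proof. move=> e he; exists 0%nat => k _. rewrite /Rdist Rminus_diag Rabs_R0; lra. Qed.

Lemma cv_ext (u v : nat -> R) l : (forall k, u k = v k) -> Un_cv u l -> Un_cv v l.
Proof. by move=> h; have -> : v = u by apply: functional_extensionality => k; rewrite h. Qed.

Lemma cv_bigplus (T : Type) (r : seq T) (F : nat -> T -> R) (f : T -> R) :
  (forall t, Un_cv (fun k => F k t) (f t)) ->
  Un_cv (fun k => \big[Rplus/0]_(t <- r) F k t) (\big[Rplus/0]_(t <- r) f t).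
Proof.
move=> h; elim: r => [|a r IH].
  rewrite big_nil; apply: (cv_ext (u := fun _ => 0)); last exact: cv_const. by move=> k; rewrite big_nil.
rewrite big_cons; apply: cv_ext; last exact: (CV_plus _ _ _ _ (h a) IH). by move=> k; rewrite big_cons.
Qed.

Lemma cv_bigmult (T : Type) (r : seq T) (F : nat -> T -> R) (f : T -> R) :
  (forall t, Un_cv (fun k => F k t) (f t)) ->
  Un_cv (fun k => \big[Rmult/1]_(t <- r) F k t) (\big[Rmult/1]_(t <- r) f t).
Proof.
move=> h; elim: r => [|a r IH].
  rewrite big_nil; apply: (cv_ext (u := fun _ => 1)); last exact: cv_const. by move=> k; rewrite big_nil.
rewrite big_cons; apply: cv_ext; last exact: (CV_mult _ _ _ _ (h a) IH). by move=> k; rewrite big_cons.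
Qed.

Lemma cv_rsum n (F : nat -> 'I_n -> R) (f : 'I_n -> R) :
  (forall t, Un_cv (fun k => F k t) (f t)) ->
  Un_cv (fun k => rsum (F k)) (rsum f).
Proof. move=> h; rewrite /rsum; exact: cv_bigplus. Qed.

Definition mcv n (s : nat -> mat n) (A : mat n) := forall i j, Un_cv (fun k => s k i j) (A i j).
Definition vcv n (s : nat -> vec n) (x : vec n) := forall i, Un_cv (fun k => s k i) (x i).

Lemma cv_mxm n (s t : nat -> mat n) A B : mcv s A -> mcv t B -> mcv (fun k => mxm (s k) (t k)) (mxm A B).
Proof. move=> hs ht i j; apply: cv_rsum => l; exact: CV_mult. Qed.
Lemma cv_trm n (s : nat -> mat n) A : mcv s A -> mcv (fun k => trm (s k)) (trm A).
Proof. by move=> hs i j; apply: hs. Qed.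
Lemma cv_mxv n (s : nat -> mat n) (t : nat -> vec n) A x : mcv s A -> vcv t x -> vcv (fun k => mxv (s k) (t k)) (mxv A x).
Proof. move=> hs ht i; apply: cv_rsum => l; exact: CV_mult. Qed.
Lemma cv_dot n (s t : nat -> vec n) x y : vcv s x -> vcv t y -> Un_cv (fun k => dot (s k) (t k)) (dot x y).
Proof. move=> hs ht; apply: cv_rsum => l; exact: CV_mult. Qed.
Lemma cv_det n (s : nat -> mat n) A : mcv s A -> Un_cv (fun k => det (s k)) (det A).
Proof.
move=> hs; rewrite /det; apply: cv_bigplus => p; apply: CV_mult; first exact: cv_const.
apply: cv_bigmult => i; exact: hs.
Qed.
Lemma cv_cstv n (x : vec n) : vcv (fun _ => x) x.
Proof. move=> i; exact: cv_const. Qed.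
Lemma cv_cstm n (x : mat n) : mcv (fun _ => x) x.
Proof. move=> i j; exact: cv_const. Qed.

Lemma fin_delta (T : finType) (Q : T -> R -> Prop) :
  (forall t, exists d, 0 < d /\ forall d', 0 < d' <= d -> Q t d') ->
  exists d, 0 < d /\ forall t, Q t d.
Proof.
move=> h.
suff [d [hd hq]] : exists d, 0 < d /\ forall t, t \in enum T -> forall d', 0 < d' <= d -> Q t d'.
  exists d; split => // t; apply: hq; [by rewrite mem_enum | lra].
elim: (enum T) => [|a r [d [hd hq]]]; first by exists 1; split => //; lra.
have [da [hda hqa]] := h a.
exists (Rmin d da); split; first by apply: Rmin_glb_lt.
move=> t; rewrite in_cons => /orP [/eqP -> | ht] d' hd'.
  apply: hqa; have := Rmin_r d da; lra.
apply: hq => //; have := Rmin_l d da; lra.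
Qed.

Lemma fin_N (T : finType) (Q : T -> nat -> Prop) :
  (forall t, exists N, forall k, (N <= k)%coq_nat -> Q t k) ->
  exists N, forall t k, (N <= k)%coq_nat -> Q t k.
Proof.
move=> h.
suff [N hq] : exists N, forall t, t \in enum T -> forall k, (N <= k)%coq_nat -> Q t k.
  by exists N => t; apply: hq; rewrite mem_enum.
elim: (enum T) => [|a r [N hq]]; first by exists 0%nat.
have [Na hqa] := h a.
exists (Nat.max N Na) => t; rewrite in_cons => /orP [/eqP -> | ht] k hk.
  apply: hqa; lia.
apply: hq => //; lia.
Qed.

Definition close n (A B : mat n) d := forall i j, Rabs (B i j - A i j) < d.

Lemma mcv_close n (s : nat -> mat n) A : mcv s A -> forall e, 0 < e -> exists N, forall k, (N <= k)%coq_nat -> close A (s k) e.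
Proof.
move=> hs e he.
have [N hN] := @fin_N ('I_n * 'I_n)%type (fun p k => Rabs (s k p.1 p.2 - A p.1 p.2) < e)
  (fun p => hs p.1 p.2 e he).
by exists N => k hk i j; apply: (hN (i, j)).
Qed.

Lemma inv_small (e : R) : 0 < e -> exists N, forall k, (N <= k)%coq_nat -> / INR (S k) < e.
Proof.
move=> he; have [N [hN hN0]] := archimed_cor1 e he.
exists N => k hk.
have h1 : 0 < INR N by apply: lt_0_INR; lia.
have h2 : INR N <= INR (S k) by apply: le_INR; lia.
apply: Rle_lt_trans hN; apply: Rinv_le_contravar => //.
Qed.

Lemma cont_of_seq n (f : mat n -> mat n) A :
  (forall s, mcv s A -> mcv (fun k => f (s k)) (f A)) ->
  forall e, 0 < e -> exists d, 0 < d /\ forall B, close A B d -> close (f A) (f B) e.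
Proof.
move=> hf e he.
have hfd : forall p : ('I_n * 'I_n)%type, exists d, 0 < d /\ forall d', 0 < d' <= d ->
   (fun p d => forall B, close A B d -> Rabs (f B p.1 p.2 - f A p.1 p.2) < e) p d'.
- move=> [i j] /=; apply: NNPP => H.
  have hex : forall d, 0 < d -> exists B, close A B d /\ e <= Rabs (f B i j - f A i j).
    move=> d hd; apply: NNPP => H2; apply: H; exists d; split => // d' hd' B hB.
    apply: Rnot_le_lt => hle; apply: H2; exists B; split => // i' j'.
    have := hB i' j'; lra.
  have hpos : forall k : nat, 0 < / INR (S k).
    move=> k; apply: Rinv_0_lt_compat; apply: lt_0_INR; lia.
  pose s k := proj1_sig (constructive_indefinite_description _ (hex _ (hpos k))).
  have hs : forall k, close A (s k) (/ INR (S k)) /\ e <= Rabs (f (s k) i j - f A i j).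
    move=> k; exact: (proj2_sig (constructive_indefinite_description _ (hex _ (hpos k)))).
  have hcv : mcv s A.
    move=> i' j' eps heps; have [N hN] := inv_small heps.
    exists N => k hk; rewrite /Rdist; have := (proj1 (hs k)) i' j'; have := hN k hk; lra.
  have [N hN] := hf s hcv i j e he.
  have := hN N (Nat.le_refl N); rewrite /Rdist; have := proj2 (hs N); lra.
- have [d [hd hq]] := fin_delta hfd.
  exists d; split => // B hB i j; exact: (hq (i, j) B hB).
Qed.

Lemma close_refl n (A : mat n) d : 0 < d -> close A A d.
Proof. move=> hd i j; rewrite Rminus_diag Rabs_R0; lra. Qed.

Lemma image_connected n (G : mat n -> Prop) (f : mat n -> mat n) :
  connected_set G ->
  (forall A, forall s, mcv s A -> mcv (fun k => f (s k)) (f A)) ->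
  connected_set (fun B => exists h, G h /\ B = f h).
Proof.
move=> hG hf U V hU hV hcov hdis [A [[hA [GA ->]] UA]] [B [[hB [GB ->]] VB]].
apply: (hG (fun h => U (f h)) (fun h => V (f h))).
- move=> X GX UX; have [e [he hUe]] := hU (f X) (ex_intro _ X (conj GX erefl)) UX.
  have [d [hd hc]] := cont_of_seq (hf X) he.
  exists d; split => // Y GY hY; apply: hUe; [by exists Y | exact: hc].
- move=> X GX VX; have [e [he hVe]] := hV (f X) (ex_intro _ X (conj GX erefl)) VX.
  have [d [hd hc]] := cont_of_seq (hf X) he.
  exists d; split => // Y GY hY; apply: hVe; [by exists Y | exact: hc].
- move=> X GX; apply: hcov; by exists X.
- move=> X GX; apply: hdis; by exists X.
- by exists hA.
- by exists hB.
Qed.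

Lemma cont_eps (g : R -> R) s0 e : continuity g -> 0 < e ->
  exists d, 0 < d /\ forall s, Rabs (s - s0) < d -> Rabs (g s - g s0) < e.
Proof.
move=> hg he; have [d [hd hq]] := hg s0 e he.
exists d; split => // s hs.
case: (Req_dec s s0) => [-> | hne]; first by rewrite Rminus_diag Rabs_R0.
apply: (hq s). split. split. exact I. by apply: not_eq_sym. exact: hs.
Qed.

Lemma path_local n (f : R -> mat n) (W : mat n -> Prop) s0 :
  (forall i j, continuity (fun s => f s i j)) ->
  rel_open (fun B => exists s, B = f s) W -> W (f s0) ->
  exists d, 0 < d /\ forall s, Rabs (s - s0) < d -> W (f s).
Proof.
move=> hc hW hs0.
have [e [he hWe]] := hW (f s0) (ex_intro _ s0 erefl) hs0.
have hfd : forall p : ('I_n * 'I_n)%type, exists d, 0 < d /\ forall d', 0 < d' <= d ->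
   (fun p d => forall s, Rabs (s - s0) < d -> Rabs (f s p.1 p.2 - f s0 p.1 p.2) < e) p d'.
  move=> [i j] /=; have [d [hd hq]] := cont_eps s0 (hc i j) he.
  exists d; split => // d' hd' s hs; apply: hq; lra.
have [d [hd hq]] := fin_delta hfd.
exists d; split => // s hs; apply: hWe; first by exists s.
move=> i j; exact: (hq (i, j) s hs).
Qed.

Lemma path_connected n (f : R -> mat n) :
  (forall i j, continuity (fun s => f s i j)) ->
  connected_set (fun B => exists s, B = f s).
Proof.
move=> hc U V hU hV hcov hdis [A [[a ->] UA]] [B [[b ->] VB]].
pose h s := if excluded_middle_informative (U (f s)) then 1 else -1.
have hloc : forall s0, exists d, 0 < d /\ forall s, Rabs (s - s0) < d -> h s = h s0.
  move=> s0; rewrite /h; case: (excluded_middle_informative (U (f s0))) => hu.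
    have [d [hd hq]] := path_local hc hU hu.
    exists d; split => // s hs; case: excluded_middle_informative => // hn; by case: (hn (hq s hs)).
  have hv : V (f s0) by case: (hcov (f s0) (ex_intro _ s0 erefl)).
  have [d [hd hq]] := path_local hc hV hv.
  exists d; split => // s hs; case: excluded_middle_informative => // hu'.
  by case: (hdis (f s) (ex_intro _ s erefl) hu' (hq s hs)).
have hcont : continuity h.
  move=> s0 e he; have [d [hd hq]] := hloc s0.
  exists d; split => // s [_ hs]; simpl in hs |- *; rewrite /Rdist in hs *; rewrite hq // Rminus_diag Rabs_R0; lra.
have ha : h a = 1 by rewrite /h; case: excluded_middle_informative.
have hb : h b = -1.
  rewrite /h; case: excluded_middle_informative => // hu.
  by case: (hdis (f b) (ex_intro _ b erefl) hu VB).
have hval : forall s, h s <> 0.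
  move=> s; rewrite /h; case: excluded_middle_informative => ? /= ?; lra.
case: (Rtotal_order a b) => [hab | [hab | hab]].
- have hc' : continuity (fun s => - h s) by apply: continuity_opp.
  have h1 : (fun s => - h s) a < 0 by rewrite /= ha; lra.
  have h2 : 0 < (fun s => - h s) b by rewrite /= hb; lra.
  have [z [_ hz]] := IVT (fun s => - h s) a b hc' hab h1 h2.
  apply: (hval z); simpl in hz; lra.
- by subst b; case: (hdis (f a) (ex_intro _ a erefl) UA VB).
- have h1 : h b < 0 by rewrite hb; lra.
  have h2 : 0 < h a by rewrite ha; lra.
  have [z [_ hz]] := IVT h b a hcont hab h1 h2.
  exact: (hval z).
Qed.

Lemma conn_same_side n (W T U V : mat n -> Prop) :
  connected_set T -> (forall A, T A -> W A) ->
  rel_open W U -> rel_open W V ->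
  (forall A, W A -> U A \/ V A) -> (forall A, W A -> U A -> V A -> False) ->
  forall A B, T A -> T B -> U A -> U B.
Proof.
move=> hT hTW hU hV hcov hdis A B TA TB UA.
apply: NNPP => nUB.
have VB : V B by case: (hcov B (hTW B TB)).
apply: (hT U V).
- move=> X TX UX; have [e [he hq]] := hU X (hTW X TX) UX.
  exists e; split => // Y TY; apply: hq; exact: hTW.
- move=> X TX VX; have [e [he hq]] := hV X (hTW X TX) VX.
  exists e; split => // Y TY; apply: hq; exact: hTW.
- move=> X TX; exact: hcov (hTW X TX).
- move=> X TX; exact: hdis (hTW X TX).
- by exists A.
- by exists B.
Qed.

End PB.

Module PC.
Import GRing.Theory.
Import PA.
Import PB.
Import ring.
Import GRing.Theory.

Local Open Scope R_scope.
Definition ch (t : R) := cos (t / 2).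
Definition sh (t : R) := sin (t / 2).
Lemma ch_neg t : ch (- t) = ch t.
Proof. by rewrite /ch -cos_neg; congr cos; lra. Qed.
Lemma sh_neg t : sh (- t) = Ropp (sh t).
Proof. by rewrite /sh -sin_neg; congr sin; lra. Qed.
Lemma cs1 t : Rplus (Rmult (ch t) (ch t)) (Rmult (sh t) (sh t)) = 1.
Proof. have := sin2_cos2 (t / 2). rewrite /Rsqr /ch /sh. lra. Qed.
Lemma cs_cos t : Rminus (Rmult (ch t) (ch t)) (Rmult (sh t) (sh t)) = cos t.
Proof. rewrite /ch /sh -cos_2a; congr cos; lra. Qed.
Lemma cs_sin t : Rmult 2 (Rmult (sh t) (ch t)) = sin t.
Proof. rewrite /ch /sh -Rmult_assoc -sin_2a; congr sin; lra. Qed.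

Definition dbl (u : R) := 2 * u.
Definition hlf (u : R) := u / 2.
Lemma dbl_hlf u : dbl (hlf u) = u. Proof. rewrite /dbl /hlf; lra. Qed.
Lemma ch_dbl u : ch (dbl u) = cos u. Proof. rewrite /ch /dbl; congr cos; lra. Qed.
Lemma sh_dbl u : sh (dbl u) = sin u. Proof. rewrite /sh /dbl; congr sin; lra. Qed.

Lemma ch0 : ch 0 = 1. Proof. by rewrite /ch /Rdiv Rmult_0_l cos_0. Qed.
Lemma sh0 : sh 0 = 0. Proof. by rewrite /sh /Rdiv Rmult_0_l sin_0. Qed.

Section Alg.
Variables (n m : nat) (p : 'I_m.+1 -> 'M[R]_n).
Hypothesis hs : forall i, (p i)^T%R = p i.
Hypothesis hsq : forall i, (p i *m p i = 1%:M)%R.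
Hypothesis hac : forall i j, i <> j -> (p i *m p j = - (p j *m p i))%R.

Local Open Scope ring_scope.

Definition J i j := p i *m p j.
Definition rotM i j (t : R) : 'M[R]_n := ch t *: 1%:M + sh t *: J i j.

Lemma mul_lin_l (a b : R) (K Y : 'M[R]_n) : (a *: 1%:M + b *: K) *m Y = a *: Y + b *: (K *m Y).
Proof. by rewrite mulmxDl -!scalemxAl mul1mx. Qed.
Lemma mul_lin_r (a b : R) (K Y : 'M[R]_n) : Y *m (a *: 1%:M + b *: K) = a *: Y + b *: (Y *m K).
Proof. by rewrite mulmxDr -!scalemxAr mulmx1. Qed.

Variables (i j : 'I_m.+1).
Hypothesis hij : i <> j.

Lemma JT : (J i j)^T = - J i j.
Proof. by rewrite /J trmx_mul !hs (hac (not_eq_sym hij)). Qed.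
Lemma Jpi : J i j *m p i = - p j.
Proof. by rewrite /J -mulmxA (hac (not_eq_sym hij)) mulmxN mulmxA hsq mul1mx. Qed.
Lemma Jpj : J i j *m p j = p i.
Proof. by rewrite /J -mulmxA hsq mulmx1. Qed.
Lemma piJ : p i *m J i j = p j.
Proof. by rewrite /J mulmxA hsq mul1mx. Qed.
Lemma pjJ : p j *m J i j = - p i.
Proof. by rewrite /J mulmxA (hac (not_eq_sym hij)) mulNmx -mulmxA hsq mulmx1. Qed.
Lemma JJ : J i j *m J i j = - 1%:M.
Proof. by rewrite {1}/J -mulmxA pjJ mulmxN hsq. Qed.

Lemma rotT t : (rotM i j t)^T = rotM i j (- t).
Proof.
rewrite /rotM linearD /= !linearZ /= trmx1 JT.
have -> : ch (- t) = ch t by exact: ch_neg.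
have -> : sh (- t) = - sh t by exact: sh_neg.
by rewrite scalerN scaleNr.
Qed.

Lemma cs1r t : ch t * ch t + sh t * sh t = 1.
Proof. exact: cs1. Qed.
Lemma cs_cosr t : ch t * ch t - sh t * sh t = cos t.
Proof. exact: cs_cos. Qed.
Lemma cs_sinr t : sh t * ch t + sh t * ch t = sin t.
Proof. by rewrite -(cs_sin t) RIneq.double. Qed.

Lemma rot_orth t : (rotM i j t)^T *m rotM i j t = 1%:M.
Proof.
rewrite rotT {1}/rotM mul_lin_l /rotM mul_lin_r JJ.
have -> : ch (- t) = ch t by exact: ch_neg.
have -> : sh (- t) = - sh t by exact: sh_neg.
set X := (1%:M : 'M[R]_n); set Y := J i j.
apply/matrixP => r q; rewrite !mxE.
rewrite -[RHS]mul1r -(cs1r t). ring.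
Qed.

Lemma rot_conj_i t : (rotM i j t)^T *m p i *m rotM i j t = cos t *: p i + sin t *: p j.
Proof.
rewrite rotT {1}/rotM mul_lin_l Jpi /rotM mulmxDl -!scalemxAl mulNmx !mul_lin_r piJ pjJ //.
have -> : ch (- t) = ch t by exact: ch_neg.
have -> : sh (- t) = - sh t by exact: sh_neg.
rewrite -(cs_cosr t) -(cs_sinr t).
set X := p i; set Y := p j.
apply/matrixP => r q; rewrite !mxE. ring.
Qed.

Lemma rot_conj_j t : (rotM i j t)^T *m p j *m rotM i j t = cos t *: p j - sin t *: p i.
Proof.
rewrite rotT {1}/rotM mul_lin_l Jpj /rotM mulmxDl -!scalemxAl !mul_lin_r piJ pjJ //.
have -> : ch (- t) = ch t by exact: ch_neg.
have -> : sh (- t) = - sh t by exact: sh_neg.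
rewrite -(cs_cosr t) -(cs_sinr t).
set X := p i; set Y := p j.
apply/matrixP => r q; rewrite !mxE. ring.
Qed.

Lemma rot_conj_k k t : k <> i -> k <> j -> (rotM i j t)^T *m p k *m rotM i j t = p k.
Proof.
move=> hki hkj.
have hc : p k *m J i j = J i j *m p k.
  rewrite /J mulmxA (hac hki) mulNmx -[(p i *m p k) *m p j]mulmxA (hac hkj) mulmxN opprK mulmxA //.
rewrite -mulmxA.
have -> : p k *m rotM i j t = rotM i j t *m p k by rewrite mul_lin_r mul_lin_l hc.
by rewrite mulmxA rot_orth mul1mx.
Qed.

Lemma rot_sq u : rotM i j (dbl u) = rotM i j u *m rotM i j u.
Proof.
rewrite {2}/rotM mul_lin_l /rotM mul_lin_r JJ ch_dbl sh_dbl.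
rewrite -(cs_cosr u) -(cs_sinr u).
set X := (1%:M : 'M[R]_n); set Y := J i j.
apply/matrixP => r q; rewrite !mxE. ring.
Qed.

Lemma rot_det t : \det (rotM i j t) = 1.
Proof.
rewrite -(dbl_hlf t) rot_sq det_mulmx.
have := congr1 determinant (rot_orth (hlf t)).
by rewrite det_mulmx det_tr det1.
Qed.
End Alg.

End PC.

Module PD.
Import GRing.Theory.
Import PA.
Import PB.
Import PC.
Import ring.
Import GRing.Theory.

Section Coef.
Variables (n m : nat) (P : 'I_m.+1 -> mat n).
Hypothesis hP : clifford_system P.
Hypothesis hn : (0 < n)%N.

Definition p i := M (P i).
Lemma p_sym i : (p i)^T%R = p i.
Proof. by apply/matrixP => a b; rewrite !mxE; case: hP => h _; rewrite h. Qed.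
Lemma p_sq i : (p i *m p i = 1%:M)%R.
Proof. by rewrite /p -M_mxm; case: hP => _ [h _]; rewrite h M_idm. Qed.
Lemma p_ac i j : i <> j -> (p i *m p j = - (p j *m p i))%R.
Proof.
move=> hij; rewrite /p -!M_mxm; case: hP => _ [_ [h _]]; rewrite h //.
by apply/matrixP => a b; rewrite !mxE.
Qed.
Lemma p_ip i j : mip (P i) (P j) = if i == j then 1%R else 0%R.
Proof. by case: hP => _ [_ [_ h]]. Qed.

Local Open Scope ring_scope.

Definition qf (B : 'M[R]_n) (v : 'cV[R]_n) : R := (v^T *m B *m v) ord0 ord0.
Lemma qf_lin a b X Y v : qf (a *: X + b *: Y) v = a * qf X v + b * qf Y v.
Proof. by rewrite /qf mulmxDr mulmxDl -!scalemxAr -!scalemxAl !mxE. Qed.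
Lemma qf_conj B A v : qf B (A *m v) = qf (A^T *m B *m A) v.
Proof. by rewrite /qf trmx_mul !mulmxA. Qed.

Definition coef (x : vec n) k := dot (mxv (P k) x) x.
Lemma coefE x k : coef x k = qf (p k) (V x).
Proof. by rewrite /coef dotE V_mxv trmx_mul p_sym. Qed.

Lemma coef_mxv A x k : coef (mxv A x) k = qf ((M A)^T *m p k *m M A) (V x).
Proof. by rewrite coefE V_mxv qf_conj. Qed.

Definition rot i j t : mat n := ofM (rotM p i j t).
Lemma M_rot i j t : M (rot i j t) = rotM p i j t.
Proof. exact: ofMK. Qed.

Lemma M_pi x : M (pi_C P x) = \sum_k coef x k *: p k.
Proof.
apply/matrixP => a b; rewrite mxE summxE /pi_C /rsum; apply: eq_bigr => k _.
by rewrite !mxE.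
Qed.

Lemma tr_sum (I : Type) (r : seq I) (F : I -> 'M[R]_n) :
  \tr (\sum_(k <- r) F k) = \sum_(k <- r) \tr (F k).
Proof. apply: big_morph; [exact: mxtraceD | exact: mxtrace0]. Qed.

Definition Fsq x := rsum (fun k => coef x k * coef x k).

Lemma mip_pi x : mip (pi_C P x) (pi_C P x) = Fsq x.
Proof.
have hd : forall A B : mat n, mip A B = \tr (M A *m M B) * (Rinv (INR n)).
  by move=> A B; rewrite /mip traceE M_mxm.
have ho : forall a b : 'I_m.+1, \tr (p a *m p b) * (Rinv (INR n)) = if a == b then 1 else 0.
  by move=> a b; rewrite -hd p_ip.
rewrite hd M_pi mulmx_suml tr_sum mulr_suml /Fsq /rsum; apply: eq_bigr => a _.
rewrite -scalemxAl mxtraceZ mulmx_sumr tr_sum mulr_sumr mulr_suml.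
rewrite (bigD1 a) //= big1 => [|b hb].
  by rewrite addr0 -scalemxAr mxtraceZ -!mulrA ho eqxx mulr1.
rewrite -scalemxAr mxtraceZ -!mulrA ho.
by rewrite eq_sym (negbTE hb) !mulr0.
Qed.

Lemma rot_entry i j s (a : mat n) r q :
  mxm (rot i j s) a r q = ch s * a r q + sh s * ((J p i j *m M a) r q).
Proof.
have -> : mxm (rot i j s) a r q = M (mxm (rot i j s) a) r q by rewrite mxE.
by rewrite M_mxm M_rot mul_lin_l !mxE.
Qed.

Lemma rot0 i j : rot i j 0 = Defs.idm n.
Proof.
apply: (@M_inj _ (rot i j 0) (Defs.idm n)); rewrite M_rot M_idm /rotM.
have -> : ch 0 = 1 by exact: ch0.
have -> : sh 0 = 0 by exact: sh0.
by rewrite scale1r scale0r addr0.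
Qed.

Variables (i j : 'I_m.+1).
Hypothesis hij : i <> j.
Lemma coef_rot_i t x : coef (mxv (rot i j t) x) i = cos t * coef x i + sin t * coef x j.
Proof. by rewrite coef_mxv M_rot rot_conj_i //; try (exact: p_sym || exact: p_sq || exact: p_ac); rewrite qf_lin -!coefE. Qed.
Lemma coef_rot_j t x : coef (mxv (rot i j t) x) j = cos t * coef x j - sin t * coef x i.
Proof.
rewrite coef_mxv M_rot rot_conj_j //; try (exact: p_sym || exact: p_sq || exact: p_ac).
by rewrite -scaleNr qf_lin -!coefE mulNr.
Qed.
Lemma coef_rot_k k t x : k <> i -> k <> j -> coef (mxv (rot i j t) x) k = coef x k.
Proof.
move=> hki hkj; rewrite coef_mxv M_rot rot_conj_k //; try (exact: p_sym || exact: p_sq || exact: p_ac).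
by rewrite -coefE.
Qed.
Lemma rot_trm t : trm (rot i j t) = rot i j (- t).
Proof. by apply: M_inj; rewrite M_trm !M_rot rotT //; try (exact: p_sym || exact: p_sq || exact: p_ac). Qed.
Lemma rot_orth_m t : mxm (trm (rot i j t)) (rot i j t) = Defs.idm n.
Proof. by apply: M_inj; rewrite M_mxm M_trm M_rot M_idm rot_orth //; try (exact: p_sym || exact: p_sq || exact: p_ac). Qed.
Lemma rot_det_m t : det (rot i j t) = 1.
Proof. by rewrite detE M_rot rot_det //; try (exact: p_sym || exact: p_sq || exact: p_ac). Qed.
Lemma cos_sin1 t : cos t * cos t + sin t * sin t = 1.
Proof. have := sin2_cos2 t. rewrite /Rsqr !RmultE RplusE R1E addrC. by []. Qed.

Lemma Fsq_rot t x : Fsq (mxv (rot i j t) x) = Fsq x.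
Proof.
have hji : j != i by apply/eqP => h; apply: hij.
rewrite /Fsq /rsum (bigD1 i) //= (bigD1 j) ?hji //=.
rewrite [in RHS](bigD1 i) //= [in RHS](bigD1 j) ?hji //=.
rewrite coef_rot_i coef_rot_j.
rewrite (eq_bigr (fun k => coef x k * coef x k)); last first.
  move=> k /andP [hki hkj]; rewrite coef_rot_k //; [by apply/eqP | by apply/eqP].
set S := \sum_(k | _) _; set a := coef x i; set b := coef x j.
rewrite -[a * a]mul1r -[b * b]mul1r -(cos_sin1 t). rewrite !RplusE. ring.
Qed.
End Coef.

End PD.

Module PE.
Import PA.
Import PB.
Import PC.
Import PD.
Import GRing.Theory.
Local Open Scope R_scope.

Lemma angle (a b : R) : exists t, cos t * a + sin t * b = sqrt (a*a + b*b) /\ cos t * b - sin t * a = 0.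
Proof.
set r := sqrt (a*a + b*b).
have hr0 : 0 <= a*a + b*b by nra.
have hrr : r * r = a*a + b*b by rewrite /r sqrt_sqrt.
have hr : 0 <= r by apply: sqrt_pos.
case: (Req_dec r 0) => hr00.
  have ha : a = 0 by nra.
  have hb : b = 0 by nra.
  exists 0; rewrite hr00 ha hb; split; ring.
have hrp : 0 < r by lra.
set c := a / r.
have hc : -1 <= c <= 1.
  rewrite /c; split.
  - apply/(Rmult_le_reg_r r) => //; rewrite /Rdiv Rmult_assoc Rinv_l //; nra.
  - apply/(Rmult_le_reg_r r) => //; rewrite /Rdiv Rmult_assoc Rinv_l //; nra.
have hsq : sqrt (1 - c²) = Rabs b / r.
  have -> : 1 - c² = (b / r)² by rewrite /c /Rsqr; field_simplify_eq; [nra | lra].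
  rewrite sqrt_Rsqr_abs /Rdiv Rabs_mult Rabs_inv (Rabs_right r) //; lra.
have key : forall t, cos t = c -> sin t = b / r -> cos t * a + sin t * b = r /\ cos t * b - sin t * a = 0.
  move=> t -> ->; rewrite /c; split; last by field; lra.
  apply/(Rmult_eq_reg_r r); last lra.
  field_simplify; [|lra]. rewrite /= !Rmult_1_r hrr. lra.
case: (Rle_lt_dec 0 b) => hb.
- exists (acos c); apply: key; first by rewrite cos_acos.
  by rewrite sin_acos // hsq Rabs_right; lra.
- exists (- acos c); apply: key; first by rewrite cos_neg cos_acos.
  by rewrite sin_neg sin_acos // hsq Rabs_left //; field; lra.
Qed.

End PE.

Module PF.
Import GRing.Theory.
Import PA.
Import PB.
Import PC.
Import PD.
Import PE.
Import GRing.Theory.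

Section MatLemmas.
Variable n : nat.
Implicit Types A B C : mat n.
Lemma mxm_assoc A B C : mxm (mxm A B) C = mxm A (mxm B C).
Proof. apply: M_inj; rewrite !M_mxm. exact: esym (mulmxA _ _ _). Qed.
Lemma mxv_mxm A B x : mxv (mxm A B) x = mxv A (mxv B x).
Proof. apply: V_inj; rewrite !V_mxv M_mxm. exact: esym (mulmxA _ _ _). Qed.
Lemma trm_mxm A B : trm (mxm A B) = mxm (trm B) (trm A).
Proof. apply: (@M_inj n (trm (mxm A B)) (mxm (trm B) (trm A))). rewrite (M_trm (mxm A B)) !M_mxm (M_trm B) (M_trm A). exact: trmx_mul. Qed.
Lemma trm_trm A : trm (trm A) = A.
Proof. by apply: functional_extensionality => i; apply: functional_extensionality. Qed.
Lemma mxm_idl A : mxm (Defs.idm n) A = A.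
Proof. apply: M_inj; rewrite M_mxm M_idm. exact: mul1mx. Qed.
Lemma mxm_idr A : mxm A (Defs.idm n) = A.
Proof.
apply: functional_extensionality => a; apply: functional_extensionality => b.
rewrite /mxm /rsum (bigD1 b) //= /Defs.idm eqxx big1 => [|k hk]; last by rewrite (negbTE hk) Rmult_0_r.
by rewrite Rmult_1_r Rplus_0_r.
Qed.
Lemma trm_idm : trm (Defs.idm n) = Defs.idm n.
Proof.
apply: functional_extensionality => a; apply: functional_extensionality => b.
by rewrite /trm /Defs.idm eq_sym.
Qed.
Lemma mxv_idm x : mxv (Defs.idm n) x = x.
Proof.
apply: functional_extensionality => a.
rewrite /mxv /rsum (bigD1 a) //= /Defs.idm eqxx big1 => [|k hk]; last by rewrite eq_sym (negbTE hk) Rmult_0_l.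
by rewrite Rmult_1_l Rplus_0_r.
Qed.
Lemma det_mxm A B : det (mxm A B) = (det A * det B)%R.
Proof. rewrite !detE M_mxm. exact: det_mulmx. Qed.
Lemma det_idm : det (Defs.idm n) = 1%R.
Proof. rewrite detE M_idm. exact: det1. Qed.
Lemma orth_dot A x : mxm (trm A) A = Defs.idm n -> dot (mxv A x) (mxv A x) = dot x x.
Proof.
move=> h; rewrite !dotE !V_mxv trmx_mul.
have -> : ((V x)^T *m (M A)^T *m (M A *m V x) = (V x)^T *m V x)%R.
  have e : ((M A)^T *m M A = 1%:M)%R by rewrite -(M_trm A) -M_mxm h M_idm.
  rewrite -mulmxA (mulmxA (M A)^T) e. by rewrite mul1mx.
by [].
Qed.
Lemma orth_back A x : mxm (trm A) A = Defs.idm n -> mxv (trm A) (mxv A x) = x.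
Proof. by move=> h; rewrite -mxv_mxm h mxv_idm. Qed.
End MatLemmas.

End PF.

Module PG.
Import PA.
Import PB.
Import PC.
Import PD.
Import PE.
Import PF.
Local Open Scope R_scope.

Section Main.
Variables (n m : nat) (P : 'I_m.+1 -> mat n).
Hypothesis hP : clifford_system P.
Variable G : mat n -> Prop.
Hypothesis hGso : SO_subgroup G.
Hypothesis hGorb : forall x y, sphere x -> sphere y ->
      (clifford_leaf P x y <-> exists g, G g /\ mxv g x = y).

Inductive Sgen : mat n -> Prop :=
 | S_id : Sgen (Defs.idm n)
 | S_G g a : G g -> Sgen a -> Sgen (mxm g a)
 | S_R i j t a : i <> j -> Sgen a -> Sgen (mxm (PD.rot P i j t) a).

Lemma Sgen_mul a b : Sgen a -> Sgen b -> Sgen (mxm a b).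
Proof.
move=> ha hb; elim: ha => [|g a' hg _ IH|i j t a' hij _ IH].
- by rewrite mxm_idl.
- rewrite mxm_assoc; exact: S_G.
- rewrite mxm_assoc; exact: S_R.
Qed.

Lemma G_trm g : G g -> G (trm g).
Proof. by case: hGso => _ [_ [_ h]] /h. Qed.
Lemma G_orth g : G g -> mxm (trm g) g = Defs.idm n /\ det g = 1.
Proof. by case: hGso => h _ /h. Qed.
Lemma G_id : G (Defs.idm n).
Proof. by case: hGso => _ [h _]. Qed.

Lemma Sgen_gen g : G g -> Sgen g.
Proof. move=> hg; rewrite -(mxm_idr g); apply: S_G => //; exact: S_id. Qed.
Lemma Sgen_rot i j t : i <> j -> Sgen (PD.rot P i j t).
Proof. move=> hij; rewrite -(mxm_idr (PD.rot P i j t)); apply: S_R => //; exact: S_id. Qed.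

Lemma Sgen_trm a : Sgen a -> Sgen (trm a).
Proof.
elim => [|g b hg _ IH|i j t b hij _ IH].
- rewrite trm_idm; exact: S_id.
- rewrite trm_mxm; apply: Sgen_mul => //; apply: Sgen_gen; exact: G_trm.
- rewrite trm_mxm; apply: Sgen_mul => //; rewrite rot_trm //; exact: Sgen_rot.
Qed.

Lemma Sgen_SO a : Sgen a -> mxm (trm a) a = Defs.idm n /\ det a = 1.
Proof.
elim => [|g b hg _ [IH1 IH2]|i j t b hij _ [IH1 IH2]].
- by rewrite trm_idm mxm_idl det_idm.
- have [h1 h2] := G_orth hg.
  rewrite trm_mxm mxm_assoc -(mxm_assoc (trm g)) h1 mxm_idl IH1 det_mxm h2 IH2; split => //; exact: GRing.mulr1.
- rewrite trm_mxm mxm_assoc -(mxm_assoc (trm (PD.rot P i j t))) (rot_orth_m hP hij) mxm_idl IH1.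
  rewrite det_mxm (rot_det_m hP hij) IH2; split => //; exact: GRing.mulr1.
Qed.

Lemma sphere_orth a x : mxm (trm a) a = Defs.idm n -> sphere x -> sphere (mxv a x).
Proof. by move=> h hx; rewrite /sphere orth_dot. Qed.

Lemma Sgen_Fsq a : Sgen a -> forall z, sphere z -> Fsq P (mxv a z) = Fsq P z.
Proof.
elim => [|g b hg hb IH|i j t b hij _ IH] z hz.
- by rewrite mxv_idm.
- rewrite mxv_mxm.
  have hy : sphere (mxv b z) by apply: sphere_orth => //; exact: (proj1 (Sgen_SO hb)).
  have hgy : sphere (mxv g (mxv b z)) by apply: sphere_orth => //; exact: (proj1 (G_orth hg)).
  have hl : clifford_leaf P (mxv b z) (mxv g (mxv b z)).
    by apply/(hGorb hy hgy); exists g.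
  by rewrite -(mip_pi hP (mxv g _)) -hl (mip_pi hP) IH.
- by rewrite mxv_mxm (Fsq_rot hP hij) IH.
Qed.


Definition Sk (x : vec n) (k : nat) :=
  rsum (fun j : 'I_m.+1 => if (j <= k)%N then coef P x j * coef P x j else 0).

Lemma Sk0 x : Sk x 0 = coef P x ord0 * coef P x ord0.
Proof.
rewrite /Sk /rsum (bigD1 ord0) //= big1 => [|j hj]; first by rewrite Rplus_0_r.
by case: j hj => [[|jj] hjj].
Qed.

Lemma Sk_step x k (hk : (k.+1 < m.+1)%N) :
  Sk x k.+1 = Sk x k + coef P x (Ordinal hk) * coef P x (Ordinal hk).
Proof.
rewrite /Sk /rsum (bigD1 (Ordinal hk)) //= [in RHS](bigD1 (Ordinal hk)) //= leqnn ltnn.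
rewrite (eq_bigr (fun j : 'I_m.+1 => if (j <= k)%N then coef P x j * coef P x j else 0)).
  ring.
move=> j hj; have hjv : (val j != k.+1).
  by apply: contra hj => /eqP hv; apply/eqP; apply: val_inj.
by rewrite leq_eqVlt (negbTE hjv) ltnS.
Qed.

Lemma SkF x : Sk x m = Fsq P x.
Proof. rewrite /Sk /Fsq; apply: eq_bigr => j _; by rewrite -ltnS ltn_ord. Qed.

Lemma claim (x : vec n) (k : nat) : (k <= m)%N -> exists w, Sgen w /\
  coef P (mxv w x) ord0 * coef P (mxv w x) ord0 = Sk x k /\
  ((0 < k)%N -> 0 <= coef P (mxv w x) ord0) /\
  (forall j : 'I_m.+1, (0 < j)%N -> (j <= k)%N -> coef P (mxv w x) j = 0) /\
  (forall j : 'I_m.+1, (k < j)%N -> coef P (mxv w x) j = coef P x j).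
Proof.
elim: k => [_|k IH hk].
  exists (Defs.idm n); split; first exact: S_id.
  rewrite mxv_idm Sk0; split => //; split => //; split => //.
  by move=> j h1 h2; have := leq_trans h1 h2.
have [w [hw [h0sq [_ [hz hu]]]]] := IH (ltnW hk).
have hk' : (k.+1 < m.+1)%N by [].
set j1 := Ordinal hk'.
have h0j1 : (ord0 : 'I_m.+1) <> j1 by move=> /(congr1 val).
set a := coef P (mxv w x) ord0.
set b := coef P (mxv w x) j1.
have hb : b = coef P x j1 by rewrite /b hu //=.
have [t [ht1 ht2]] := angle a b.
exists (mxm (PD.rot P ord0 j1 t) w); split; first exact: S_R.
have cri : forall y, coef P (mxv (PD.rot P ord0 j1 t) y) ord0 = cos t * coef P y ord0 + sin t * coef P y j1.
  move=> y; exact: (coef_rot_i hP h0j1 t y).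
have crj : forall y, coef P (mxv (PD.rot P ord0 j1 t) y) j1 = cos t * coef P y j1 - sin t * coef P y ord0.
  move=> y; exact: (coef_rot_j hP h0j1 t y).
have crk : forall y (j : 'I_m.+1), j <> ord0 -> j <> j1 -> coef P (mxv (PD.rot P ord0 j1 t) y) j = coef P y j.
  move=> y j h1 h2; exact: (coef_rot_k hP h0j1 t y h1 h2).
rewrite !mxv_mxm cri; fold a; fold b; rewrite ht1.
have hab : 0 <= a * a + b * b by nra.
split; first by rewrite sqrt_sqrt // Sk_step h0sq -hb.
split; first by move=> _; apply: sqrt_pos.
split.
  move=> j hj0 hjk.
  case: (eqVneq j j1) => [-> | hjj1].
    by rewrite crj; fold a; fold b; rewrite ht2.
  rewrite crk; first (apply: hz => //).
  - have : (val j != k.+1) by apply: contra hjj1 => /eqP hv; apply/eqP; apply: val_inj.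
    by rewrite -ltnS ltn_neqAle hjk andbT eq_sym => ->.
  - by move=> h; move: hj0; rewrite h.
  - by move/eqP: hjj1.
move=> j hj.
rewrite crk; first (apply: hu; exact: ltnW).
- by move=> h; move: hj; rewrite h.
- by move=> h; move: hj; rewrite h /= ltnn.
Qed.

Lemma reduce (x : vec n) : (1 <= m)%N -> exists w, Sgen w /\
  forall j, coef P (mxv w x) j = (if j == ord0 then sqrt (Fsq P x) else 0).
Proof.
move=> hm; have [w [hw [h0sq [h0pos [hz _]]]]] := claim x (leqnn m).
exists w; split => // j.
case: (eqVneq j ord0) => [-> | hj].
  rewrite -SkF -h0sq sqrt_square //; exact: h0pos.
apply: hz; last by rewrite -ltnS ltn_ord.
by rewrite lt0n; apply: contra hj => /eqP h; apply/eqP; apply: val_inj.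
Qed.


Definition Gp (A : mat n) := forall C : mat n -> Prop, Defs.closed_set C -> (forall B, Sgen B -> C B) -> C A.

Lemma Gp_closed : Defs.closed_set Gp.
Proof. move=> s A hs hcv C hC hS; apply: (hC s A) => // k; exact: hs k C hC hS. Qed.
Lemma Sgen_Gp a : Sgen a -> Gp a.
Proof. by move=> ha C _ hS; apply: hS. Qed.
Lemma Gp_ind (Q : mat n -> Prop) : Defs.closed_set Q -> (forall B, Sgen B -> Q B) -> forall A, Gp A -> Q A.
Proof. by move=> hQ hS A hA; apply: hA. Qed.

Lemma cl_mulr a : Defs.closed_set (fun x => Gp (mxm x a)).
Proof. move=> s A hs hcv; apply: (Gp_closed (s := fun k => mxm (s k) a)) => //; exact: cv_mxm hcv (cv_cstm a). Qed.
Lemma cl_mull x : Defs.closed_set (fun y => Gp (mxm x y)).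
Proof. move=> s A hs hcv; apply: (Gp_closed (s := fun k => mxm x (s k))) => //; exact: cv_mxm (cv_cstm x) hcv. Qed.
Lemma cl_trm : Defs.closed_set (fun x => Gp (trm x)).
Proof. move=> s A hs hcv; apply: (Gp_closed (s := fun k => trm (s k))) => //; exact: cv_trm. Qed.

Lemma cl_SO : Defs.closed_set (fun A => mxm (trm A) A = Defs.idm n /\ det A = 1).
Proof.
move=> s A hs hcv; split.
  apply: functional_extensionality => i; apply: functional_extensionality => j.
  have h := cv_mxm (cv_trm hcv) hcv i j.
  apply: (UL_sequence _ _ _ h); apply: (cv_ext (u := fun _ => Defs.idm n i j)); last exact: cv_const.
  by move=> k; rewrite (proj1 (hs k)).
apply: (UL_sequence _ _ _ (cv_det hcv)); apply: (cv_ext (u := fun _ => 1)); last exact: cv_const.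
by move=> k; rewrite (proj2 (hs k)).
Qed.

Lemma cv_Fsq (s : nat -> mat n) A z : mcv s A -> Un_cv (fun k => Fsq P (mxv (s k) z)) (Fsq P (mxv A z)).
Proof.
move=> hcv; apply: cv_rsum => j.
have hv := cv_mxv hcv (cv_cstv z).
have hc := cv_dot (cv_mxv (cv_cstm (P j)) hv) hv.
exact: (CV_mult _ _ _ _ hc hc).
Qed.

Lemma cl_Fsq : Defs.closed_set (fun A => forall z, sphere z -> Fsq P (mxv A z) = Fsq P z).
Proof.
move=> s A hs hcv z hz.
apply: (UL_sequence _ _ _ (cv_Fsq z hcv)); apply: (cv_ext (u := fun _ => Fsq P z)); last exact: cv_const.
by move=> k; rewrite hs.
Qed.

Lemma Gp_mul x y : Gp x -> Gp y -> Gp (mxm x y).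
Proof.
have step1 : forall a, Sgen a -> forall x, Gp x -> Gp (mxm x a).
  move=> a ha; apply: (Gp_ind (Q := fun x => Gp (mxm x a))); first exact: cl_mulr.
  move=> B hB; apply: Sgen_Gp; exact: Sgen_mul.
move=> hx; apply: (Gp_ind (Q := fun y => Gp (mxm x y))); first exact: cl_mull.
move=> B hB; exact: step1.
Qed.
Lemma Gp_trm x : Gp x -> Gp (trm x).
Proof. apply: (Gp_ind (Q := fun x => Gp (trm x))); first exact: cl_trm. move=> B hB; apply: Sgen_Gp; exact: Sgen_trm. Qed.
Lemma Gp_SO x : Gp x -> mxm (trm x) x = Defs.idm n /\ det x = 1.
Proof. apply: (Gp_ind (Q := fun x => mxm (trm x) x = Defs.idm n /\ det x = 1)); first exact: cl_SO. exact: Sgen_SO. Qed.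
Lemma Gp_Fsq x : Gp x -> forall z, sphere z -> Fsq P (mxv x z) = Fsq P z.
Proof. apply: (Gp_ind (Q := fun x => forall z, sphere z -> Fsq P (mxv x z) = Fsq P z)); first exact: cl_Fsq. exact: Sgen_Fsq. Qed.

Lemma sep_closed (W : mat n -> Prop) : rel_open Gp W -> Defs.closed_set (fun X => Gp X /\ ~ W X).
Proof.
move=> hW s A hs hcv.
have GA : Gp A by apply: (Gp_closed (s := s)) => // k; exact: (proj1 (hs k)).
split => // WA.
have [e [he hq]] := hW A GA WA.
have [N hN] := mcv_close hcv he.
apply: (proj2 (hs N)); apply: hq; first exact: (proj1 (hs N)).
exact: hN.
Qed.

Lemma cont_ch : continuity ch.
Proof.
have -> : ch = comp cos (fun s => s * / 2) by apply: functional_extensionality.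
apply: continuity_comp; last exact: continuity_cos.
apply: (continuity_mult id (fun _ => / 2)); first exact: derivable_continuous derivable_id.
by apply: continuity_const.
Qed.
Lemma cont_sh : continuity sh.
Proof.
have -> : sh = comp sin (fun s => s * / 2) by apply: functional_extensionality.
apply: continuity_comp; last exact: continuity_sin.
apply: (continuity_mult id (fun _ => / 2)); first exact: derivable_continuous derivable_id.
by apply: continuity_const.
Qed.

Lemma cont_rot_entry i j (b : mat n) r q : continuity (fun s => mxm (PD.rot P i j s) b r q).
Proof.
have -> : (fun s => mxm (PD.rot P i j s) b r q) =
   (fun s => ch s * b r q + sh s * ((J (p P) i j *m M b)%R r q)).
  by apply: functional_extensionality => s; rewrite rot_entry.
apply: (continuity_plus (fun s => ch s * b r q) (fun s => sh s * ((J (p P) i j *m M b)%R r q))).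
- apply: (continuity_mult ch (fun _ => b r q)); [exact: cont_ch | by apply: continuity_const].
- apply: (continuity_mult sh (fun _ => ((J (p P) i j *m M b)%R r q))); [exact: cont_sh | by apply: continuity_const].
Qed.

Lemma Gp_conn : connected_set G -> connected_set Gp.
Proof.
move=> hGc U V hU hV hcov hdis [A [GA UA]] [B [GB VB]].
have side : forall a, Sgen a -> (U a <-> U (Defs.idm n)).
  move=> a0; elim => [|g b hg hb IH|i j t b hij hb IH]; first by [].
  - pose T := fun X => exists h, G h /\ X = mxm h b.
    have hT : connected_set T.
      apply: (image_connected (f := fun h => mxm h b)) => //.
      move=> A0 s hs; exact: cv_mxm hs (cv_cstm b).
    have hTW : forall X, T X -> Gp X.
      move=> X [h [hh ->]]; apply: Sgen_Gp; exact: S_G.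
    have Tb : T b by exists (Defs.idm n); split; [exact: G_id | by rewrite mxm_idl].
    have Tgb : T (mxm g b) by exists g.
    have e1 := conn_same_side hT hTW hU hV hcov hdis Tb Tgb.
    have e2 := conn_same_side hT hTW hU hV hcov hdis Tgb Tb.
    by rewrite -IH; split.
  - pose T := fun X => exists s, X = mxm (PD.rot P i j s) b.
    have hT : connected_set T.
      apply: path_connected => r q; exact: cont_rot_entry.
    have hTW : forall X, T X -> Gp X.
      move=> X [s ->]; apply: Sgen_Gp; exact: S_R.
    have Tb : T b.
      exists 0. have e0 : PD.rot P i j 0 = Defs.idm n by exact: (PD.rot0 P i j).
      rewrite e0.
      by rewrite mxm_idl.
    have Tgb : T (mxm (PD.rot P i j t) b) by exists t.
    have e1 := conn_same_side hT hTW hU hV hcov hdis Tb Tgb.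
    have e2 := conn_same_side hT hTW hU hV hcov hdis Tgb Tb.
    by rewrite -IH; split.
case: (classic (U (Defs.idm n))) => hI.
- have hC := sep_closed hV.
  have : Gp B /\ ~ V B.
    apply: (Gp_ind hC) => // X hX; split; first exact: Sgen_Gp.
    move=> VX; apply: (hdis X (Sgen_Gp hX)) => //; by apply/(side X hX).
  by case.
- have hC := sep_closed hU.
  have : Gp A /\ ~ U A.
    apply: (Gp_ind hC) => // X hX; split; first exact: Sgen_Gp.
    by move=> UX; apply: hI; apply/(side X hX).
  by case.
Qed.

Lemma piE z : pi_C P z = fun a b => rsum (fun i => coef P z i * P i a b).
Proof. by []. Qed.

Lemma orbit (hm : (1 <= m)%N) x y : sphere x -> sphere y ->
  (fkm_leaf P x y <-> exists g, Gp g /\ mxv g x = y).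
Proof.
move=> hx hy; split.
- rewrite /fkm_leaf /mnorm !(mip_pi hP) => hf.
  have [w1 [hw1 hc1]] := reduce x hm.
  have [w2 [hw2 hc2]] := reduce y hm.
  have hpi : pi_C P (mxv w1 x) = pi_C P (mxv w2 y).
    rewrite !piE; apply: functional_extensionality => a; apply: functional_extensionality => b.
    by apply: eq_bigr => i _; rewrite hc1 hc2 hf.
  have s1 : sphere (mxv w1 x) by apply: sphere_orth => //; exact: (proj1 (Sgen_SO hw1)).
  have s2 : sphere (mxv w2 y) by apply: sphere_orth => //; exact: (proj1 (Sgen_SO hw2)).
  have [g [hg hgx]] := proj1 (hGorb s1 s2) hpi.
  exists (mxm (trm w2) (mxm g w1)); split.
    apply: Sgen_Gp; apply: Sgen_mul; [exact: Sgen_trm | exact: S_G].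
  by rewrite !mxv_mxm hgx orth_back //; exact: (proj1 (Sgen_SO hw2)).
- move=> [g [hg <-]].
  by rewrite /fkm_leaf /mnorm !(mip_pi hP) (Gp_Fsq hg).
Qed.

End Main.


End PG.

Import PA PB PC PD PE PF PG.
Theorem proposition5p1 (l m : nat) (P : 'I_m.+1 -> mat (2 * l)) :
  (1 <= m)%N -> (m.+1 < l)%N ->
  clifford_system P ->
  homogeneous_foliation (clifford_leaf P) ->
  homogeneous_foliation (fkm_leaf P).
Proof.
move=> hm _ hP [G [hGso [_ [hGc hGorb]]]].
exists (PG.Gp P G); split; last split; last split.
- split; first by move=> A hA; exact: Gp_SO hA.
  split; first by apply: Sgen_Gp; exact: S_id.
  split; first by move=> A B hA hB; exact: Gp_mul.
  by move=> A hA; exact: Gp_trm.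
- exact: Gp_closed.
- exact: Gp_conn.
- move=> x y hx hy; exact: orbit.
Qed.
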